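(* For every $s\in\mathbb{C}$ with $\Re(s)>1$, $$(2^s+1)\sum_{n\ge1}\frac{t_{n-1}}{n^s}+(2^s-1)\sum_{n\ge1}\frac{t_n}{n^s}=2^s\zeta(s).$$
   Context: For $n\ge 0$, let $t_n\in\{0,1\}$ denote the sum of the binary digits of $n$ reduced modulo $2$ (so $t_0=0$; this is the Thue–Morse sequence). $\zeta(s)=\sum_{n\ge1}n^{-s}$ is the Riemann zeta function. *)

(* Defs.v *)
From Stdlib Require Import Reals Lra Lia.
From Coquelicot Require Import Coquelicot.
Open Scope R_scope.

(* Sum of binary digits of n; fuel argument [f] is >= n, which suffices
   since n halves at each step. *)
Fixpoint bin_digit_sum_aux (f n : nat) : nat :=
  match f with
  | O => O
  | S f' => match n with
            | O => O
            | S _ => (n mod 2 + bin_digit_sum_aux f' (Nat.div2 n))%nat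
            end
  end.

Definition bin_digit_sum (n : nat) : nat := bin_digit_sum_aux n n.

Definition thue_morse (n : nat) : nat := (bin_digit_sum n mod 2)%nat.

Definition Cexp (z : C) : C :=
  (exp (Re z) * cos (Im z), exp (Re z) * sin (Im z)).

Definition Cpow_pos (x : R) (s : C) : C := Cexp (Cmult s (RtoC (ln x))).

Definition nat_pow_neg (n : nat) (s : C) : C := Cinv (Cpow_pos (INR n) s).

(* Main.v *)
Require Import Defs.
From Stdlib Require Import Reals Lra Lia.
From Coquelicot Require Import Coquelicot.
Open Scope R_scope.

Lemma aux_fuel : forall f g n, (n <= f)%nat -> (n <= g)%nat ->
  bin_digit_sum_aux f n = bin_digit_sum_aux g n.
Proof.
  induction f as [|f IH]; intros g n Hf Hg.
  - assert (n = 0%nat) by lia; subst. destruct g; reflexivity.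
  - destruct n as [|n']; [destruct g; reflexivity|].
    destruct g as [|g]; [lia|]. cbn [bin_digit_sum_aux].
    f_equal. apply IH.
    + pose proof (Nat.le_div2 n'). lia.
    + pose proof (Nat.le_div2 n'). lia.
Qed.

Lemma aux_S f m : bin_digit_sum_aux (S f) (S m) = ((S m) mod 2 + bin_digit_sum_aux f (Nat.div2 (S m)))%nat.
Proof. reflexivity. Qed.

Lemma bds_even j : bin_digit_sum (2*j) = bin_digit_sum j.
Proof.
  destruct j as [|j]; [reflexivity|].
  unfold bin_digit_sum at 1.
  replace (2 * S j)%nat with (S (S (2*j)))%nat by lia.
  rewrite aux_S.
  replace (S (S (2 * j)) mod 2)%nat with 0%nat.
  2:{ replace (S (S (2*j))) with (S j * 2)%nat by lia. rewrite Nat.Div0.mod_mul. reflexivity. }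
  replace (Nat.div2 (S (S (2 * j)))) with (S j).
  2:{ replace (S (S (2*j))) with (2 * S j)%nat by lia. rewrite Nat.div2_double. reflexivity. }
  rewrite Nat.add_0_l. apply aux_fuel; lia.
Qed.

Lemma bds_odd j : bin_digit_sum (S (2*j)) = S (bin_digit_sum j).
Proof.
  unfold bin_digit_sum at 1. rewrite aux_S.
  replace (S (2 * j) mod 2)%nat with 1%nat.
  2:{ replace (S (2*j)) with (1 + j * 2)%nat by lia. rewrite Nat.Div0.mod_add. reflexivity. }
  replace (Nat.div2 (S (2 * j))) with j.
  2:{ rewrite Nat.div2_succ_double. reflexivity. }
  rewrite Nat.add_1_l. f_equal. apply aux_fuel; lia.
Qed.

Lemma tm_even j : thue_morse (2*j) = thue_morse j.
Proof. unfold thue_morse. now rewrite bds_even. Qed.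

Lemma tm_odd j : INR (thue_morse (S (2*j))) = 1 - INR (thue_morse j).
Proof.
  unfold thue_morse. rewrite bds_odd.
  assert (H: (S (bin_digit_sum j) mod 2 + bin_digit_sum j mod 2 = 1)%nat).
  { set (m := bin_digit_sum j). pose proof (Nat.div_mod_eq m 2). pose proof (Nat.div_mod_eq (S m) 2).
    pose proof (Nat.mod_upper_bound m 2). pose proof (Nat.mod_upper_bound (S m) 2). lia. }
  apply (f_equal INR) in H. rewrite plus_INR in H. change (INR 1) with 1 in H. lra.
Qed.

Lemma tm_le1 n : INR (thue_morse n) <= 1.
Proof.
  unfold thue_morse. assert (bin_digit_sum n mod 2 <= 1)%nat.
  { pose proof (Nat.mod_upper_bound (bin_digit_sum n) 2). lia. }
  apply le_INR in H. simpl in H. exact H.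
Qed.

Lemma Cexp_add a b : Cexp (Cplus a b) = Cmult (Cexp a) (Cexp b).
Proof.
  destruct a as [a1 a2], b as [b1 b2]. unfold Cexp, Cplus, Cmult; simpl.
  rewrite exp_plus, cos_plus, sin_plus. f_equal; ring.
Qed.

Lemma Cmod_Cexp z : Cmod (Cexp z) = exp (Re z).
Proof.
  destruct z as [x y]. unfold Cexp, Cmod; simpl.
  assert (Hc := sin2_cos2 y). unfold Rsqr in Hc.
  match goal with |- sqrt ?e = _ => replace e with (exp x ^ 2 * (sin y * sin y + cos y * cos y)) by ring end.
  rewrite Hc, Rmult_1_r.
  rewrite sqrt_pow2; [reflexivity|]. left; apply exp_pos.
Qed.

Lemma Cexp_neq0 z : Cexp z <> 0%C.
Proof.
  intro H. pose proof (Cmod_Cexp z) as E. rewrite H, Cmod_0 in E.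
  pose proof (exp_pos (Re z)). lra.
Qed.

Lemma Cpow_pos_mult x y s : 0 < x -> 0 < y ->
  Cpow_pos (x*y) s = Cmult (Cpow_pos x s) (Cpow_pos y s).
Proof.
  intros Hx Hy. unfold Cpow_pos. rewrite ln_mult by assumption.
  rewrite <- Cexp_add. f_equal.
  rewrite <- Cmult_plus_distr_l. f_equal. unfold RtoC, Cplus; simpl. f_equal; ring.
Qed.

Lemma npn_double j s : nat_pow_neg (S (S (2*j))) s =
  Cmult (Cinv (Cpow_pos 2 s)) (nat_pow_neg (S j) s).
Proof.
  unfold nat_pow_neg.
  replace (INR (S (S (2*j)))) with (2 * INR (S j)).
  2:{ replace (S (S (2*j))) with (2 * S j)%nat by lia. rewrite mult_INR. reflexivity. }
  rewrite Cpow_pos_mult by (try lra; apply lt_0_INR; lia).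
  unfold Cpow_pos. field. split; apply Cexp_neq0.
Qed.

Lemma Cmod_npn k s : Cmod (nat_pow_neg (S k) s) = exp (- Re s * ln (INR (S k))).
Proof.
  unfold nat_pow_neg, Cpow_pos. rewrite Cmod_inv by apply Cexp_neq0.
  rewrite Cmod_Cexp. rewrite <- exp_Ropp. f_equal.
  destruct s as [a b]; unfold Cmult, RtoC; simpl. ring.
Qed.

Lemma ln_le_sub1 y : 0 < y -> ln y <= y - 1.
Proof. intros Hy. pose proof (exp_ineq1_le (ln y)). rewrite exp_ln in H by lra. lra. Qed.

Lemma key_ineq (sg x : R) : 1 < sg -> 1 < x ->
  (sg - 1) * exp (- sg * ln x) <= exp ((1 - sg) * ln (x - 1)) - exp ((1 - sg) * ln x).
Proof.
  intros Hs Hx.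
  set (u := ln x). set (v := ln (x-1)). set (E := exp ((1-sg)*u)).
  assert (HE : 0 < E) by apply exp_pos.
  assert (H1 : exp ((1-sg)*v) = E * exp ((1-sg)*(v-u))).
  { unfold E. rewrite <- exp_plus. f_equal. ring. }
  assert (H2 := exp_ineq1_le ((1-sg)*(v-u))).
  assert (H3 : v - u <= - / x).
  { unfold v, u. rewrite <- ln_div by lra.
    eapply Rle_trans. apply ln_le_sub1. apply Rdiv_lt_0_compat; lra.
    apply Req_le. field. lra. }
  assert (H4 : exp (- sg * u) = E * / x).
  { unfold E, u. replace (/ x) with (exp (- ln x)) by (rewrite exp_Ropp, exp_ln; lra).
    rewrite <- exp_plus. f_equal. ring. }
  rewrite H1, H4.
  assert (H5 : (sg - 1) * / x <= (1-sg)*(v-u)) by nra.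
  assert (0 < / x) by (apply Rinv_0_lt_compat; lra).
  nra.
Qed.

Definition rr (sg : R) (k : nat) := exp (- sg * ln (INR (S k))).
Definition gg (sg : R) (k : nat) := exp ((1 - sg) * ln (INR (S k))).

Lemma psum_bound sg n : 1 < sg ->
  sum_n (rr sg) n <= 1 + (1 - gg sg n) / (sg - 1).
Proof.
  intros Hs. induction n as [|n IH].
  - rewrite sum_O. unfold rr, gg. change (INR 1) with 1. rewrite ln_1, !Rmult_0_r, exp_0.
    unfold Rdiv. lra.
  - rewrite sum_Sn. simpl plus.
    assert (K := key_ineq sg (INR (S (S n))) Hs).
    assert (1 < INR (S (S n))) by (rewrite !S_INR; pose proof (pos_INR n); lra).
    specialize (K H).
    replace (INR (S (S n)) - 1) with (INR (S n)) in K by (rewrite (S_INR (S n)); ring).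
    unfold rr, gg in *.
    apply Rle_trans with (1 + (1 - exp ((1 - sg) * ln (INR (S n)))) / (sg - 1) + exp (- sg * ln (INR (S (S n))))).
    { change (plus (sum_n (fun k => exp (- sg * ln (INR (S k)))) n) (exp (- sg * ln (INR (S (S n)))))) with
        (sum_n (fun k => exp (- sg * ln (INR (S k)))) n + exp (- sg * ln (INR (S (S n))))). lra. }
    apply Rmult_le_compat_l with (r := / (sg - 1)) in K.
    2:{ left. apply Rinv_0_lt_compat. lra. }
    rewrite <- Rmult_assoc, Rinv_l, Rmult_1_l in K by lra.
    unfold Rdiv. lra.
Qed.

Lemma rr_ex_series sg : 1 < sg -> ex_series (rr sg).
Proof.
  intros Hs.
  assert (Hf : ex_finite_lim_seq (sum_n (rr sg))).
  { apply ex_finite_lim_seq_incr with (M := 1 + 1 / (sg - 1)).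
    - intros n. rewrite sum_Sn.
      change (plus (sum_n (rr sg) n) (rr sg (S n))) with (sum_n (rr sg) n + rr sg (S n)).
      unfold rr. pose proof (exp_pos (- sg * ln (INR (S (S n))))). lra.
    - intros n. eapply Rle_trans. apply psum_bound; exact Hs.
      unfold gg. pose proof (exp_pos ((1 - sg) * ln (INR (S n)))).
      unfold Rdiv. apply Rplus_le_compat_l. apply Rmult_le_compat_r.
      left; apply Rinv_0_lt_compat; lra. lra. }
  destruct Hf as [l Hl]. exists l. exact Hl.
Qed.

Lemma sum_odd (c : nat -> C) : (forall j, c (2*j)%nat = 0%C) ->
  forall j, sum_n c (S (2*j)) = sum_n (fun i => c (S (2*i))) j.
Proof.
  intros Hc. induction j as [|j IH].
  - simpl. rewrite sum_Sn, !sum_O. change (Cplus (c 0%nat) (c 1%nat) = c 1%nat).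
    pose proof (Hc 0%nat) as H0; simpl in H0; rewrite H0. ring.
  - replace (S (2 * S j)) with (S (S (S (2*j)))) by lia.
    rewrite (sum_Sn c (S (S (2*j)))), (sum_Sn c (S (2*j))), (sum_Sn (fun i => c (S (2*i))) j), IH.
    replace (S (S (2*j))) with (2 * S j)%nat by lia. rewrite Hc.
    replace (S (2 * S j)) with (S (S (S (2*j)))) by lia.
    change (Cplus (Cplus (sum_n (fun i : nat => c (S (2 * i))) j) 0%C) (c (S (S (S (2 * j)))))
      = Cplus (sum_n (fun i : nat => c (S (2 * i))) j) (c (S (S (S (2 * j)))))). ring.
Qed.

Lemma norm_term t k s : 0 <= t <= 1 ->
  norm (Cmult (RtoC t) (nat_pow_neg (S k) s)) <= rr (Re s) k.
Proof.
  intros Ht. change (Cmod (Cmult (RtoC t) (nat_pow_neg (S k) s)) <= rr (Re s) k).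
  rewrite Cmod_mult, Cmod_R, Cmod_npn. unfold rr.
  rewrite Rabs_pos_eq by lra. pose proof (exp_pos (- Re s * ln (INR (S k)))). nra.
Qed.

Theorem theorem3 (s : C) (hs : (1 < Re s)%R) :
  exists A B Z : C,
    is_series (fun k : nat =>
       Cmult (RtoC (INR (thue_morse k))) (nat_pow_neg (S k) s)) A /\
    is_series (fun k : nat =>
       Cmult (RtoC (INR (thue_morse (S k)))) (nat_pow_neg (S k) s)) B /\
    is_series (fun k : nat => nat_pow_neg (S k) s) Z /\
    Cplus (Cmult (Cplus (Cpow_pos 2 s) 1) A)
          (Cmult (Cminus (Cpow_pos 2 s) 1) B)
    = Cmult (Cpow_pos 2 s) Z.
Proof.
  set (at_ := fun k : nat => Cmult (RtoC (INR (thue_morse k))) (nat_pow_neg (S k) s)).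
  set (bt := fun k : nat => Cmult (RtoC (INR (thue_morse (S k)))) (nat_pow_neg (S k) s)).
  set (zt := fun k : nat => nat_pow_neg (S k) s).
  assert (Hr := rr_ex_series _ hs).
  assert (exA : ex_series at_).
  { apply (@ex_series_le C_AbsRing C_CompleteNormedModule _ (rr (Re s))); [|exact Hr]. intros n. apply norm_term.
    split; [apply pos_INR|apply tm_le1]. }
  assert (exB : ex_series bt).
  { apply (@ex_series_le C_AbsRing C_CompleteNormedModule _ (rr (Re s))); [|exact Hr]. intros n. apply norm_term.
    split; [apply pos_INR|apply tm_le1]. }
  assert (exZ : ex_series zt).
  { apply (@ex_series_le C_AbsRing C_CompleteNormedModule _ (rr (Re s))); [|exact Hr]. intros n.
    unfold zt. replace (nat_pow_neg (S n) s) with (Cmult (RtoC 1) (nat_pow_neg (S n) s)) by ring.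
    apply norm_term. lra. }
  destruct exA as [A HA], exB as [B HB], exZ as [Z HZ].
  exists A, B, Z. split; [exact HA|]. split; [exact HB|]. split; [exact HZ|].
  set (P2 := Cpow_pos 2 s).
  assert (HP2 : P2 <> 0%C) by apply Cexp_neq0.
  set (c := fun n => Cplus (Cplus (at_ n) (bt n)) (Copp (zt n))).
  assert (Hc : is_series c (Cplus (Cplus A B) (Copp Z))).
  { assert (H1 := @is_series_plus C_AbsRing C_NormedModule at_ bt A B HA HB).
    assert (H2 := @is_series_minus C_AbsRing C_NormedModule _ zt _ Z H1 HZ).
    eapply is_series_ext; [|exact H2]. intros n. reflexivity. }
  assert (Hc0 : forall j, c (2*j)%nat = 0%C).
  { intros j. unfold c, at_, bt, zt.
    change (Cplus (Cplus (Cmult (RtoC (INR (thue_morse (2*j)))) (nat_pow_neg (S (2*j)) s))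
      (Cmult (RtoC (INR (thue_morse (S (2*j))))) (nat_pow_neg (S (2*j)) s))) (Copp (nat_pow_neg (S (2*j)) s)) = 0%C).
    rewrite tm_even, tm_odd. rewrite RtoC_minus. ring. }
  set (v := fun j => Cmult (Cinv P2) (Cplus (bt j) (Copp (at_ j)))).
  assert (Hv : forall j, c (S (2*j)) = v j).
  { intros j. unfold c, v, at_, bt, zt.
    change (Cplus (Cplus (Cmult (RtoC (INR (thue_morse (S (2*j))))) (nat_pow_neg (S (S (2*j))) s))
      (Cmult (RtoC (INR (thue_morse (S (S (2*j)))))) (nat_pow_neg (S (S (2*j))) s))) (Copp (nat_pow_neg (S (S (2*j))) s))
      = Cmult (Cinv P2) (Cplus (Cmult (RtoC (INR (thue_morse (S j)))) (nat_pow_neg (S j) s))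
          (Copp (Cmult (RtoC (INR (thue_morse j))) (nat_pow_neg (S j) s))))).
    replace (S (S (2*j))) with (2 * S j)%nat at 2 by lia.
    rewrite tm_even, tm_odd, npn_double. fold P2. rewrite RtoC_minus. ring. }
  assert (Hv1 : is_series v (Cmult (Cinv P2) (Cplus B (Copp A)))).
  { assert (H1 := @is_series_minus C_AbsRing C_NormedModule bt at_ B A HB HA).
    assert (H2 := @is_series_scal C_AbsRing C_NormedModule (Cinv P2) _ _ H1).
    eapply is_series_ext; [|exact H2]. intros n. reflexivity. }
  assert (Hv2 : is_series v (Cplus (Cplus A B) (Copp Z))).
  { unfold is_series.
    apply filterlim_ext with (f := fun j => sum_n c (S (2*j))).
    { intros j. rewrite sum_odd by exact Hc0. apply sum_n_ext. intros i. apply Hv. }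
    apply filterlim_comp with (G := eventually) (f := fun j => S (2*j)) (g := sum_n c).
    - intros P [N HN]. exists N. intros n Hn. apply HN. lia.
    - exact Hc. }
  assert (E := filterlim_locally_unique _ _ _ Hv1 Hv2).
  change (Cmult (Cinv P2) (Cplus B (Copp A)) = Cplus (Cplus A B) (Copp Z)) in E.
  assert (E2 : Cplus B (Copp A) = Cmult P2 (Cplus (Cplus A B) (Copp Z))).
  { rewrite <- E. field. exact HP2. }
  unfold Cminus. fold P2.
  replace (Cmult P2 Z) with (Cplus (Cplus (Cmult P2 A) (Cmult P2 B)) (Copp (Cmult P2 (Cplus (Cplus A B) (Copp Z))))) by ring.
  rewrite <- E2. ring.
Qed.
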